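(* Let $A$ be a graded $R$-algebra and $M$ an $A$-bimodule such that $M$ is free as a left $A$-module on a generating graded $R$-module $X$, i.e. $M\cong A\otimes X$ as left $A$-modules, and the right $A$-action on $M$ satisfies $(a\otimes x)\cdot b-(-1)^{mn}ab\otimes x\in A\otimes X_{<m}$ for all $a\in A$, $x\in X_m$, $b\in A_n$ and $m,n\ge0$. Then $M$ is free as a right $A$-module.
   Context: $R$ is a commutative ring; gradings are nonnegative; $X_{<m}=\bigoplus_{j<m}X_j$; signs follow the Koszul convention. *)

(* Defs.v *)
From HB Require Import structures.
From mathcomp Require Import all_boot all_order all_algebra.
Set Implicit Arguments.
Unset Strict Implicit.
Unset Printing Implicit Defensive.
Import GRing.Theory.
Local Open Scope ring_scope.

Section GradedDefs.
Variable R : comPzRingType.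

(* [Vg n v] : v is homogeneous of degree n.  V = (+)_{n>=0} V_n internally:
   each V_n is an R-submodule, every v is a finite sum of homogeneous
   components, and such a decomposition is unique. *)
Definition graded_module (V : lmodType R) (Vg : nat -> V -> Prop) : Prop :=
  [/\ (forall n, Vg n 0),
      (forall n u v, Vg n u -> Vg n v -> Vg n (u + v)),
      (forall n (r : R) v, Vg n v -> Vg n (r *: v)),
      (forall v, exists N (c : 'I_N -> V),
           (forall i : 'I_N, Vg i (c i)) /\ v = \sum_(i < N) c i) &
      (forall N (c : 'I_N -> V), (forall i : 'I_N, Vg i (c i)) ->
           \sum_(i < N) c i = 0 -> forall i, c i = 0)].

Definition graded_algebra (A : algType R) (Ag : nat -> A -> Prop) : Prop :=
  [/\ graded_module Ag, Ag 0%N 1 &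
      forall m n a b, Ag m a -> Ag n b -> Ag (m + n)%N (a * b)].

Variable A : algType R.

Definition left_action (N : zmodType) (act : A -> N -> N) : Prop :=
  [/\ (forall n, act 1 n = n),
      (forall a b n, act (a * b) n = act a (act b n)),
      (forall a b n, act (a + b) n = act a n + act b n) &
      (forall a n n', act a (n + n') = act a n + act a n')].

Definition right_action (N : zmodType) (act : N -> A -> N) : Prop :=
  [/\ (forall n, act n 1 = n),
      (forall a b n, act n (a * b) = act (act n a) b),
      (forall a b n, act n (a + b) = act n a + act n b) &
      (forall a n n', act (n + n') a = act n a + act n' a)].

Definition bimodule (M : lmodType R) (lact : A -> M -> M) (ract : M -> A -> M) :=
  [/\ left_action lact, right_action ract,
      (forall a m b, ract (lact a m) b = lact a (ract m b)),
      (forall (r : R) m, r *: m = lact (r%:A) m) &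
      (forall (r : R) m, r *: m = ract m (r%:A))].

Definition graded_bimodule (Ag : nat -> A -> Prop) (M : lmodType R)
    (Mg : nat -> M -> Prop) (lact : A -> M -> M) (ract : M -> A -> M) :=
  [/\ bimodule lact ract, graded_module Mg,
      (forall i j a m, Ag i a -> Mg j m -> Mg (i + j)%N (lact a m)) &
      (forall i j m a, Mg i m -> Ag j a -> Mg (i + j)%N (ract m a))].

(* M is free as a left A-module on X via iota : the induced left A-linear
   map A (x)_R X -> M, a (x) x |-> a . iota x, is an isomorphism;
   stated by the universal property of A (x)_R X. *)
Definition left_free_on (M : lmodType R) (lact : A -> M -> M)
    (X : lmodType R) (iota : X -> M) : Prop :=
  (forall x y, iota (x + y) = iota x + iota y) /\
  (forall (r : R) x, iota (r *: x) = r *: iota x) /\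
  forall (N : zmodType) (act : A -> N -> N), left_action act ->
  forall f : X -> N, (forall x y, f (x + y) = f x + f y) ->
    (forall (r : R) x, f (r *: x) = act (r%:A) (f x)) ->
    (exists g : M -> N, [/\ (forall m m', g (m + m') = g m + g m'),
                            (forall a m, g (lact a m) = act a (g m)) &
                            (forall x, g (iota x) = f x)]) /\
    (forall g1 g2 : M -> N,
        (forall m m', g1 (m + m') = g1 m + g1 m') ->
        (forall a m, g1 (lact a m) = act a (g1 m)) ->
        (forall x, g1 (iota x) = f x) ->
        (forall m m', g2 (m + m') = g2 m + g2 m') ->
        (forall a m, g2 (lact a m) = act a (g2 m)) ->
        (forall x, g2 (iota x) = f x) ->
        forall m, g1 m = g2 m).

(* M is free as a right A-module on Y via iota : Y (x)_R A -> M,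
   y (x) a |-> iota y . a, is an isomorphism (universal property). *)
Definition right_free_on (M : lmodType R) (ract : M -> A -> M)
    (Y : lmodType R) (iota : Y -> M) : Prop :=
  (forall x y, iota (x + y) = iota x + iota y) /\
  (forall (r : R) x, iota (r *: x) = r *: iota x) /\
  forall (N : zmodType) (act : N -> A -> N), right_action act ->
  forall f : Y -> N, (forall x y, f (x + y) = f x + f y) ->
    (forall (r : R) x, f (r *: x) = act (f x) (r%:A)) ->
    (exists g : M -> N, [/\ (forall m m', g (m + m') = g m + g m'),
                            (forall a m, g (ract m a) = act (g m) a) &
                            (forall x, g (iota x) = f x)]) /\
    (forall g1 g2 : M -> N,
        (forall m m', g1 (m + m') = g1 m + g1 m') ->
        (forall a m, g1 (ract m a) = act (g1 m) a) ->
        (forall x, g1 (iota x) = f x) ->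
        (forall m m', g2 (m + m') = g2 m + g2 m') ->
        (forall a m, g2 (ract m a) = act (g2 m) a) ->
        (forall x, g2 (iota x) = f x) ->
        forall m, g1 m = g2 m).

Definition degree_preserving (X M : lmodType R) (Xg : nat -> X -> Prop)
    (Mg : nat -> M -> Prop) (iota : X -> M) : Prop :=
  forall n x, Xg n x -> Mg n (iota x).

(* membership in (the image in M ~ A (x) X of) A (x) X_{<m}:
   finite sums  sum_i a_i . iota x_i  with x_i homogeneous of degree < m *)
Definition in_AX_lt (M : lmodType R) (lact : A -> M -> M) (X : lmodType R)
    (Xg : nat -> X -> Prop) (iota : X -> M) (m : nat) (v : M) : Prop :=
  exists k (a : 'I_k -> A) (x : 'I_k -> X),
    (forall i, exists j, (j < m)%N /\ Xg j (x i)) /\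
    v = \sum_(i < k) lact (a i) (iota (x i)).

End GradedDefs.

(* Main.v *)
Require Import Defs.
From HB Require Import structures.
From mathcomp Require Import all_boot all_order all_algebra.
From mathcomp Require Import boolp.
From mathcomp Require Import zify.
From Stdlib Require Import IndefiniteDescription.
Set Implicit Arguments.
Unset Strict Implicit.
Unset Printing Implicit Defensive.
Import GRing.Theory.
Local Open Scope ring_scope.

Record HF (A N : zmodType) := MkHF { hf :> A -> N;
  hf_add : forall a b, hf (a + b) = hf a + hf b }.

HB.instance Definition _ (A N : zmodType) := gen_eqMixin (HF A N).
HB.instance Definition _ (A N : zmodType) := gen_choiceMixin (HF A N).

Section HFdef.
Variables (A N : zmodType).
Lemma hf_ext (f g : HF A N) : (forall a, f a = g a) -> f = g.
Proof.
case: f => f fP; case: g => g gP /= H.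
have E := funext H; subst g; congr MkHF; exact: Prop_irrelevance.
Qed.
Lemma hf0P (a b : A) : (0 : N) = 0 + 0. Proof. by rewrite addr0. Qed.
Definition hf0 : HF A N := MkHF (fun a b => hf0P a b).
Lemma hfaddP (f g : HF A N) a b : f (a + b) + g (a + b) = (f a + g a) + (f b + g b).
Proof. by rewrite !hf_add addrACA. Qed.
Definition hfadd (f g : HF A N) : HF A N := MkHF (hfaddP f g).
Lemma hfoppP (f : HF A N) a b : - f (a + b) = - f a + - f b.
Proof. by rewrite hf_add opprD. Qed.
Definition hfopp (f : HF A N) : HF A N := MkHF (hfoppP f).
Lemma hfaddA : associative hfadd.
Proof. by move=> f g h; apply: hf_ext => a /=; rewrite addrA. Qed.
Lemma hfaddC : commutative hfadd.
Proof. by move=> f g; apply: hf_ext => a /=; rewrite addrC. Qed.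
Lemma hfadd0 : left_id hf0 hfadd.
Proof. by move=> f; apply: hf_ext => a /=; rewrite add0r. Qed.
Lemma hfaddN : left_inverse hf0 hfopp hfadd.
Proof. by move=> f; apply: hf_ext => a /=; rewrite addNr. Qed.
End HFdef.

HB.instance Definition _ (A N : zmodType) :=
  GRing.isZmodule.Build (HF A N) (@hfaddA A N) (@hfaddC A N) (@hfadd0 A N) (@hfaddN A N).

Lemma hfaddE (A N : zmodType) (f g : HF A N) a : (f + g) a = f a + g a.
Proof. by []. Qed.

Lemma add0P (U V : zmodType) (h : U -> V) : (forall a b, h (a + b) = h a + h b) -> h 0 = 0.
Proof. by move=> H; apply: (addrI (h 0)); rewrite -H !addr0. Qed.
Lemma addNP (U V : zmodType) (h : U -> V) : (forall a b, h (a + b) = h a + h b) ->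
  forall a, h (- a) = - h a.
Proof.
move=> H a; apply: (addrI (h a)); by rewrite -H !subrr (add0P H).
Qed.
Lemma addBP (U V : zmodType) (h : U -> V) : (forall a b, h (a + b) = h a + h b) ->
  forall a b, h (a - b) = h a - h b.
Proof. by move=> H a b; rewrite H (addNP H). Qed.
Lemma addSP (U V : zmodType) (h : U -> V) : (forall a b, h (a + b) = h a + h b) ->
  forall k (F : 'I_k -> U), h (\sum_(i < k) F i) = \sum_(i < k) h (F i).
Proof.
move=> H; elim=> [|k IH] F; first by rewrite !big_ord0 (add0P H).
by rewrite !big_ord_recr /= H IH.
Qed.

Lemma sum_ext (U : zmodType) (c : nat -> U) N K : (forall i, (N <= i)%N -> c i = 0) ->
  (N <= K)%N -> \sum_(i < K) c i = \sum_(i < N) c i.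
Proof.
move=> H; elim: K => [|K IH]; first by rewrite leqn0 => /eqP->.
rewrite leq_eqVlt => /orP[/eqP<-//|]; rewrite ltnS => le.
by rewrite big_ord_recr /= IH // H // addr0.
Qed.
Section Proj.
Variables (R : comPzRingType) (V : lmodType R) (Vg : nat -> V -> Prop).
Hypothesis HV : graded_module Vg.

Lemma Vg0 n : Vg n 0. Proof. by case: HV. Qed.
Lemma VgD n u v : Vg n u -> Vg n v -> Vg n (u + v). Proof. by case: HV => _ H _ _ _; apply: H. Qed.
Lemma VgZ n r v : Vg n v -> Vg n (r *: v). Proof. by case: HV => _ _ H _ _; apply: H. Qed.
Lemma VgB n u v : Vg n u -> Vg n v -> Vg n (u - v).
Proof. by move=> Hu Hv; apply: VgD => //; rewrite -scaleN1r; apply: VgZ. Qed.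

Lemma uniq_nat N (c d : nat -> V) : (forall i, Vg i (c i)) -> (forall i, Vg i (d i)) ->
  \sum_(i < N) c i = \sum_(i < N) d i -> forall i, (i < N)%N -> c i = d i.
Proof.
move=> Hc Hd Hs i iN; case: HV => _ _ _ _ U.
have := U N (fun j : 'I_N => c j - d j) (fun j => VgB (Hc j) (Hd j)).
rewrite sumrB Hs subrr => /(_ erefl (Ordinal iN)) /= /eqP; rewrite subr_eq0 => /eqP.
done.
Qed.

Lemma dec_ex v : exists p : nat * (nat -> V), (forall i, Vg i (p.2 i)) /\
  (forall i, (p.1 <= i)%N -> p.2 i = 0) /\ v = \sum_(i < p.1) p.2 i.
Proof.
case: HV => _ _ _ D _; case: (D v) => N [c [Hc ->]].
exists (N, fun i => oapp c 0 (insub i)) => /=; split; [|split].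
- move=> i; case: insubP => [j _ <-|_] /=; [exact: Hc|exact: Vg0].
- by move=> i Ni; rewrite insubN // -leqNgt.
- by apply: eq_bigr => i _; rewrite valK.
Qed.

Definition decV v := proj1_sig (constructive_indefinite_description _ (dec_ex v)).
Definition bnd v := (decV v).1.
Definition pr n v := (decV v).2 n.
Lemma pr_hom n v : Vg n (pr n v).
Proof. by case: (proj2_sig (constructive_indefinite_description _ (dec_ex v))). Qed.
Lemma pr_big n v : (bnd v <= n)%N -> pr n v = 0.
Proof. by case: (proj2_sig (constructive_indefinite_description _ (dec_ex v))) => _ [H _]; apply: H. Qed.
Lemma pr_sum v : v = \sum_(i < bnd v) pr i v.
Proof. by case: (proj2_sig (constructive_indefinite_description _ (dec_ex v))) => _ [_ H]. Qed.

Lemma pr_char (c : nat -> V) N v : (forall i, Vg i (c i)) ->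
  (forall i, (N <= i)%N -> c i = 0) -> v = \sum_(i < N) c i -> forall n, pr n v = c n.
Proof.
move=> Hc Hb Hv n; pose K := (N + bnd v + n.+1)%N.
apply: (@uniq_nat K) => //; first (by move=> i; apply: pr_hom); last by rewrite /K; lia.
rewrite (@sum_ext _ (fun i => pr i v) (bnd v) K); last by rewrite /K; lia.
  rewrite (@sum_ext _ c N K) //; last by rewrite /K; lia.
  by rewrite -Hv -pr_sum.
by move=> i; apply: pr_big.
Qed.

Lemma pr_D n u v : pr n (u + v) = pr n u + pr n v.
Proof.
apply: (@pr_char (fun i => pr i u + pr i v) (bnd u + bnd v)).
- by move=> i; apply: VgD; apply: pr_hom.
- by move=> i Hi; rewrite !pr_big ?addr0 //; lia.
- rewrite big_split /= (@sum_ext _ (fun i => pr i u) (bnd u)); last 2 first.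
    by move=> i; exact: pr_big. by lia.
  rewrite (@sum_ext _ (fun i => pr i v) (bnd v)); last 2 first.
    by move=> i; exact: pr_big. by lia.
  by rewrite -!pr_sum.
Qed.

Lemma pr_Z n r v : pr n (r *: v) = r *: pr n v.
Proof.
apply: (@pr_char (fun i => r *: pr i v) (bnd v)).
- by move=> i; apply: VgZ; apply: pr_hom.
- by move=> i Hi; rewrite pr_big ?scaler0.
- by rewrite -scaler_sumr -pr_sum.
Qed.

Lemma pr_id n m v : Vg n v -> pr m v = if m == n then v else 0.
Proof.
move=> Hv; apply: (@pr_char (fun i => if i == n then v else 0) n.+1).
- by move=> i; case: eqP => [->|_] //; exact: Vg0.
- by move=> i Hi; case: eqP => // E; subst; rewrite ltnn in Hi.
- rewrite big_ord_recr /= eqxx big1 ?add0r // => i _.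
  by case: eqP => // E; have := ltn_ord i; rewrite E ltnn.
Qed.

Lemma pr0 n : pr n 0 = 0.
Proof. by rewrite (@pr_id 0 n 0 (Vg0 0)); case: eqP. Qed.
End Proj.
Lemma sgn_sq (R : comPzRingType) k : (-1) ^+ k * (-1) ^+ k = 1 :> R.
Proof. by rewrite -exprD addnn -mul2n exprM expr2 mulrNN mulr1 expr1n. Qed.

Section Main.
Variables (R : comPzRingType) (A : algType R) (Ag : nat -> A -> Prop)
  (M : lmodType R) (Mg : nat -> M -> Prop)
  (lact : A -> M -> M) (ract : M -> A -> M)
  (X : lmodType R) (Xg : nat -> X -> Prop) (iota : X -> M).
Hypotheses (HA : graded_algebra Ag) (HM : graded_bimodule Ag Mg lact ract)
  (HX : graded_module Xg) (HL : left_free_on lact iota).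
Hypothesis Hyp : forall (m n : nat) (a b : A) (x : X), Xg m x -> Ag n b ->
     in_AX_lt lact Xg iota m
       (ract (lact a (iota x)) b - ((-1) ^+ (m * n) : R) *: lact (a * b) (iota x)).

Lemma HAm : graded_module Ag. Proof. by case: HA. Qed.
Lemma HB : bimodule lact ract. Proof. by case: HM. Qed.
Lemma l1 m : lact 1 m = m. Proof. by case: HB => [[]]. Qed.
Lemma lM a b m : lact (a * b) m = lact a (lact b m). Proof. by case: HB => [[]]. Qed.
Lemma lDa a b m : lact (a + b) m = lact a m + lact b m. Proof. by case: HB => [[]]. Qed.
Lemma lDm a m m' : lact a (m + m') = lact a m + lact a m'. Proof. by case: HB => [[]]. Qed.
Lemma r1 m : ract m 1 = m. Proof. by case: HB => _ []. Qed.
Lemma rM a b m : ract m (a * b) = ract (ract m a) b. Proof. by case: HB => _ []. Qed.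
Lemma rDa a b m : ract m (a + b) = ract m a + ract m b. Proof. by case: HB => _ []. Qed.
Lemma rDm a m m' : ract (m + m') a = ract m a + ract m' a. Proof. by case: HB => _ []. Qed.
Lemma sl r m : r *: m = lact (r%:A) m. Proof. by case: HB. Qed.
Lemma sr r m : r *: m = ract m (r%:A). Proof. by case: HB. Qed.
Lemma iD x y : iota (x + y) = iota x + iota y. Proof. by case: HL. Qed.
Lemma iZ r x : iota (r *: x) = r *: iota x. Proof. by case: HL => _ []. Qed.

Definition sgn (k : nat) : R := (-1) ^+ k.
Definition tw j (a : A) := \sum_(i < bnd HAm a) sgn (j * i) *: pr HAm i a.

Lemma twK j v K : (bnd HAm v <= K)%N -> tw j v = \sum_(i < K) sgn (j * i) *: pr HAm i v.
Proof.
move=> le; rewrite /tw (@sum_ext _ (fun i => sgn (j * i) *: pr HAm i v) (bnd HAm v) K) //.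
by move=> i Hi; rewrite pr_big ?scaler0.
Qed.

Lemma tw_D j u v : tw j (u + v) = tw j u + tw j v.
Proof.
pose K := (bnd HAm u + bnd HAm v + bnd HAm (u + v))%N.
rewrite (@twK j u K) ?(@twK j v K) ?(@twK j (u + v) K) /K; try lia.
by rewrite -big_split; apply: eq_bigr => i _; rewrite pr_D scalerDr.
Qed.

Lemma tw_Z j r v : tw j (r *: v) = r *: tw j v.
Proof.
pose K := (bnd HAm v + bnd HAm (r *: v))%N.
rewrite (@twK j v K) ?(@twK j (r *: v) K) /K; try lia.
by rewrite scaler_sumr; apply: eq_bigr => i _; rewrite pr_Z !scalerA mulrC.
Qed.

Lemma tw_tw j a : tw j (tw j a) = a.
Proof.
pose c i := sgn (j * i) *: pr HAm i a.
have Hc : forall i, Ag i (c i) by move=> i; apply: VgZ HAm _ _ _ (pr_hom _ _ _).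
have Hb : forall i, (bnd HAm a <= i)%N -> c i = 0 by move=> i Hi; rewrite /c pr_big ?scaler0.
have E := @pr_char _ _ _ HAm c (bnd HAm a) (tw j a) Hc Hb erefl.
pose K := (bnd HAm a + bnd HAm (tw j a))%N.
rewrite (@twK j (tw j a) K) /K; last lia.
rewrite [RHS](pr_sum HAm a) -(@sum_ext _ (fun i => pr HAm i a) (bnd HAm a) K); last 2 first.
- by move=> i Hi; rewrite pr_big.
- lia.
by apply: eq_bigr => i _; rewrite E /c scalerA /sgn sgn_sq scale1r.
Qed.

Inductive Fm (j : nat) : M -> Prop :=
| Fm0 : Fm j 0
| FmD u v : Fm j u -> Fm j v -> Fm j (u + v)
| FmG i x c : (i < j)%N -> Xg i x -> Fm j (lact c (iota x)).

Lemma Fm_mono i j v : (i <= j)%N -> Fm i v -> Fm j v.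
Proof.
move=> le; elim=> [|u w _ Hu _ Hw|i' x c lt Hx]; first exact: Fm0.
- exact: FmD.
- by apply: FmG Hx; apply: leq_trans le.
Qed.

Lemma Fm_sum j k (F : 'I_k -> M) : (forall i, Fm j (F i)) -> Fm j (\sum_(i < k) F i).
Proof.
elim: k F => [|k IH] F HF; first by rewrite big_ord0; exact: Fm0.
by rewrite big_ord_recr /=; apply: FmD => //; apply: IH.
Qed.

Lemma Fm_AX j v : in_AX_lt lact Xg iota j v -> Fm j v.
Proof.
case=> k [a [x [Hx ->]]]; apply: Fm_sum => i.
by case: (Hx i) => i' [lt Hi']; apply: FmG Hi'.
Qed.

Definition D j y a := ract (iota y) a - lact (tw j a) (iota y).

Lemma HD j y a : Xg j y -> Fm j (D j y a).
Proof.
move=> Hy.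
have rA : forall a b, ract (iota y) (a + b) = ract (iota y) a + ract (iota y) b.
  by move=> ? ?; apply: rDa.
have lA : forall a b, lact (a + b) (iota y) = lact a (iota y) + lact b (iota y).
  by move=> ? ?; apply: lDa.
have E : D j y a = \sum_(n < bnd HAm a) (ract (lact 1 (iota y)) (pr HAm n a)
     - ((-1) ^+ (j * n) : R) *: lact (1 * pr HAm n a) (iota y)).
  rewrite sumrB /D; congr (_ - _).
  - have -> : ract (iota y) a = ract (iota y) (\sum_(n < bnd HAm a) pr HAm n a)
      by rewrite -pr_sum.
    by rewrite (addSP rA); apply: eq_bigr => i _; rewrite l1.
  - rewrite /tw (addSP lA); apply: eq_bigr => i _.
    by rewrite mul1r sl -lM mulr_algl.
rewrite E; apply: Fm_sum => n; apply: Fm_AX; apply: Hyp => //.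
exact: pr_hom.
Qed.

Lemma D_y j y z a : D j (y + z) a = D j y a + D j z a.
Proof. by rewrite /D iD rDm lDm opprD addrACA. Qed.
Lemma D_a j y a b : D j y (a + b) = D j y a + D j y b.
Proof. by rewrite /D tw_D rDa lDa opprD addrACA. Qed.
Lemma D_bal j y r a : D j (r *: y) a = D j y (a * r%:A).
Proof.
rewrite /D iZ mulr_algr tw_Z; congr (_ - _).
- by rewrite [r *: iota y]sr -rM mulr_algl.
- by rewrite [r *: iota y]sl -lM mulr_algr.
Qed.

Section Univ.
Variable N : zmodType.

Lemma actHP (a : A) (phi : HF A N) c d : phi ((c + d) * a) = phi (c * a) + phi (d * a).
Proof. by rewrite mulrDl hf_add. Qed.
Definition actH (a : A) (phi : HF A N) : HF A N := MkHF (actHP a phi).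

Lemma actH_left : left_action actH.
Proof.
split.
- by move=> phi; apply: hf_ext => c /=; rewrite mulr1.
- by move=> a b phi; apply: hf_ext => c /=; rewrite mulrA.
- by move=> a b phi; apply: hf_ext => c /=; rewrite mulrDr hf_add.
- by move=> a phi psi; apply: hf_ext => c /=.
Qed.

Definition Hyps (k : X -> A -> N) :=
  [/\ forall x y c, k (x + y) c = k x c + k y c,
      forall x c d, k x (c + d) = k x c + k x d &
      forall r x c, k (r *: x) c = k x (c * r%:A)].

Lemma U_ex k : exists g : M -> N, Hyps k ->
  (forall m m', g (m + m') = g m + g m') /\ (forall c x, g (lact c (iota x)) = k x c).
Proof.
case: (lem (Hyps k)) => [[k1 k2 k3]|nH]; last by exists (fun _ => 0).
pose kH x := MkHF (k2 x).
case: HL => _ [_ LU].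
case: (LU (HF A N) actH actH_left kH) => [x y|r x|[g [g1 g2 g3]] _].
- by apply: hf_ext => c /=; apply: k1.
- by apply: hf_ext => c /=; apply: k3.
exists (fun m => g m 1) => _; split.
- by move=> m m'; rewrite g1.
- by move=> c x; rewrite g2 /= mul1r g3.
Qed.

Definition U k : M -> N := proj1_sig (constructive_indefinite_description _ (U_ex k)).
Lemma U_P k : Hyps k ->
  (forall m m', U k (m + m') = U k m + U k m') /\ (forall c x, U k (lact c (iota x)) = k x c).
Proof. exact: (proj2_sig (constructive_indefinite_description _ (U_ex k))). Qed.

Lemma GofP (g : M -> N) (gD : forall m m', g (m + m') = g m + g m') m c d :
  g (lact (c + d) m) = g (lact c m) + g (lact d m).
Proof. by rewrite lDa gD. Qed.
Definition Gof g gD m : HF A N := MkHF (@GofP g gD m).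

Lemma UNIQ (g1 g2 : M -> N) (gD1 : forall m m', g1 (m + m') = g1 m + g1 m')
  (gD2 : forall m m', g2 (m + m') = g2 m + g2 m') :
  (forall c x, g1 (lact c (iota x)) = g2 (lact c (iota x))) -> forall m, g1 m = g2 m.
Proof.
move=> H12 m.
case: HL => _ [_ LU].
case: (LU (HF A N) actH actH_left (fun x => Gof gD1 (iota x))) => [x y|r x|_ Uq].
- by apply: hf_ext => c /=; rewrite iD lDm gD1.
- by apply: hf_ext => c /=; rewrite iZ sl -lM.
have := Uq (Gof gD1) (Gof gD2).
move=> /(_ _ _ _ _ _ _ m) /(congr1 (fun phi : HF A N => phi 1)) /=; rewrite !l1; apply.
- by move=> m1 m2; apply: hf_ext => c /=; rewrite lDm gD1.
- by move=> a m1; apply: hf_ext => c /=; rewrite lM.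
- by [].
- by move=> m1 m2; apply: hf_ext => c /=; rewrite lDm gD2.
- by move=> a m1; apply: hf_ext => c /=; rewrite lM.
- by move=> x; apply: hf_ext => c /=; rewrite H12.
Qed.

Lemma hom_red (g1 g2 : M -> N) (gD1 : forall m m', g1 (m + m') = g1 m + g1 m')
  (gD2 : forall m m', g2 (m + m') = g2 m + g2 m') :
  (forall j y c, Xg j y -> g1 (lact c (iota y)) = g2 (lact c (iota y))) ->
  forall m, g1 m = g2 m.
Proof.
move=> H; apply: UNIQ => // c x.
have lA : forall m m', lact c (m + m') = lact c m + lact c m' by move=> ? ?; apply: lDm.
rewrite (pr_sum HX x) (addSP iD) (addSP lA) (addSP gD1) (addSP gD2).
by apply: eq_bigr => i _; apply: H; apply: pr_hom.
Qed.
End Univ.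

Section Build.
Variables (N : zmodType) (act : N -> A -> N).
Hypothesis Hact : right_action act.
Variable f : X -> N.
Hypotheses (fD : forall x y, f (x + y) = f x + f y)
  (fZ : forall (r : R) x, f (r *: x) = act (f x) (r%:A)).

Lemma a1 n : act n 1 = n. Proof. by case: Hact. Qed.
Lemma aM a b n : act n (a * b) = act (act n a) b. Proof. by case: Hact. Qed.
Lemma aDa a b n : act n (a + b) = act n a + act n b. Proof. by case: Hact. Qed.
Lemma aDn a n n' : act (n + n') a = act n a + act n' a. Proof. by case: Hact. Qed.

Definition T (h : M -> N) j y c := act (f y) (tw j c) - h (D j y (tw j c)).

Section TH.
Variable h : M -> N.
Hypothesis hD : forall m m', h (m + m') = h m + h m'.
Lemma T_y j y z c : T h j (y + z) c = T h j y c + T h j z c.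
Proof. by rewrite /T fD aDn D_y hD opprD addrACA. Qed.
Lemma T_c j y c d : T h j y (c + d) = T h j y c + T h j y d.
Proof. by rewrite /T tw_D aDa D_a hD opprD addrACA. Qed.
Lemma T_bal j y r c : T h j (r *: y) c = T h j y (c * r%:A).
Proof.
by rewrite /T D_bal fZ -aM !mulr_algr tw_Z mulr_algl.
Qed.
Lemma T0 j c : T h j 0 c = 0.
Proof. exact: (add0P (h := fun y => T h j y c) (fun y z => T_y j y z c)). Qed.
End TH.

Definition kS (h : M -> N) m x c := \sum_(i < m.+1) T h i (pr HX i x) c.

Lemma kS_hyps h m : (forall m1 m2, h (m1 + m2) = h m1 + h m2) -> Hyps (kS h m).
Proof.
move=> hD; split.
- by move=> x y c; rewrite /kS -big_split; apply: eq_bigr => i _; rewrite pr_D T_y.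
- by move=> x c d; rewrite /kS -big_split; apply: eq_bigr => i _; rewrite T_c.
- by move=> r x c; rewrite /kS; apply: eq_bigr => i _; rewrite pr_Z T_bal.
Qed.

Fixpoint H m : M -> N := match m with 0 => fun _ => 0 | m'.+1 => U (kS (H m') m') end.

Lemma H_add m : forall m1 m2, H m (m1 + m2) = H m m1 + H m m2.
Proof.
elim: m => [|m IH] m1 m2 /=; first by rewrite addr0.
by case: (U_P (kS_hyps m IH)) => ->.
Qed.

Lemma H_val m i y c : (i <= m)%N -> Xg i y -> H m.+1 (lact c (iota y)) = T (H m) i y c.
Proof.
move=> le Hy /=; case: (U_P (kS_hyps m (@H_add m))) => _ ->.
rewrite /kS (bigD1 (Ordinal (le : (i < m.+1)%N))) //= (pr_id HX i Hy) eqxx big1 ?addr0 //.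
move=> j /eqP ne; rewrite (pr_id HX _ Hy); case: eqP => [E|_]; last exact: T0 (@H_add m) _ _.
by case: ne; apply: val_inj.
Qed.

Lemma FmH (h1 h2 : M -> N) j : (forall m1 m2, h1 (m1 + m2) = h1 m1 + h1 m2) ->
  (forall m1 m2, h2 (m1 + m2) = h2 m1 + h2 m2) ->
  (forall i x c, (i < j)%N -> Xg i x -> h1 (lact c (iota x)) = h2 (lact c (iota x))) ->
  forall v, Fm j v -> h1 v = h2 v.
Proof.
move=> D1 D2 G v; elim=> [|u w _ Hu _ Hw|i x c lt Hx].
- by rewrite (add0P D1) (add0P D2).
- by rewrite D1 D2 Hu Hw.
- exact: (G i x c lt Hx).
Qed.

Lemma Stab m v : Fm m v -> H m.+1 v = H m v.
Proof.
elim: m v => [|m IH] v; apply: FmH; try exact: H_add.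
- by [].
- move=> i x c lt Hx; rewrite (@H_val m.+1 i x c) ?(@H_val m i x c) //; last exact: ltnW.
  by rewrite /T IH //; apply: Fm_mono (HD _ Hx).
Qed.

Lemma Chain i m v : (i <= m)%N -> Fm i v -> H m v = H i v.
Proof.
elim: m => [|m IH]; first by rewrite leqn0 => /eqP->.
rewrite leq_eqVlt => /orP[/eqP<-//|]; rewrite ltnS => le Fv.
by rewrite Stab ?IH //; apply: Fm_mono Fv.
Qed.

Definition kI x c := \sum_(i < bnd HX x) T (H i) i (pr HX i x) c.

Lemma kIK x c K : (bnd HX x <= K)%N -> kI x c = \sum_(i < K) T (H i) i (pr HX i x) c.
Proof.
move=> le; rewrite /kI (@sum_ext _ (fun i => T (H i) i (pr HX i x) c) (bnd HX x) K) //.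
by move=> i Hi; rewrite pr_big // T0 //; apply: H_add.
Qed.

Lemma kI_hyps : Hyps kI.
Proof.
split.
- move=> x y c; pose K := (bnd HX x + bnd HX y + bnd HX (x + y))%N.
  rewrite (@kIK x c K) ?(@kIK y c K) ?(@kIK (x + y) c K) /K; try lia.
  by rewrite -big_split; apply: eq_bigr => i _; rewrite pr_D T_y //; apply: H_add.
- by move=> x c d; rewrite /kI -big_split; apply: eq_bigr => i _; rewrite T_c //; apply: H_add.
- move=> r x c; pose K := (bnd HX x + bnd HX (r *: x))%N.
  rewrite (@kIK x _ K) ?(@kIK (r *: x) c K) /K; try lia.
  by apply: eq_bigr => i _; rewrite pr_Z T_bal //; apply: H_add.
Qed.

Definition g := U kI.
Lemma g_add m m' : g (m + m') = g m + g m'.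
Proof. by rewrite /g; case: (U_P kI_hyps) => ->. Qed.

Lemma g_val j y c : Xg j y -> g (lact c (iota y)) = T (H j) j y c.
Proof.
move=> Hy; rewrite /g; case: (U_P kI_hyps) => _ ->.
have le : (j < bnd HX y + j.+1)%N by lia.
rewrite (@kIK y c (bnd HX y + j.+1)); last lia.
rewrite (bigD1 (Ordinal le)) //= (pr_id HX j Hy) eqxx big1 ?addr0 //.
move=> i /eqP ne; rewrite (pr_id HX _ Hy); case: eqP => [E|_]; last by rewrite T0 //; apply: H_add.
by case: ne; apply: val_inj.
Qed.

Lemma g_H j v : Fm j v -> g v = H j v.
Proof.
apply: FmH; [exact: g_add|exact: H_add|].
move=> i x c lt Hx; rewrite (g_val _ Hx).
case: j lt => // j lt; rewrite (@H_val j i x c) //.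
by rewrite /T (@Chain i j) //; apply: HD.
Qed.

Lemma key j y e : Xg j y -> g (ract (iota y) e) = act (f y) e.
Proof.
move=> Hy.
have -> : ract (iota y) e = D j y e + lact (tw j e) (iota y) by rewrite /D subrK.
by rewrite g_add (g_val _ Hy) /T tw_tw (g_H (HD _ Hy)) addrC subrK.
Qed.

Lemma keyG x e : g (ract (iota x) e) = act (f x) e.
Proof.
have rA : forall m m', ract (m + m') e = ract m e + ract m' e by move=> ? ?; apply: rDm.
have aA : forall n n', act (n + n') e = act n e + act n' e by move=> ? ?; apply: aDn.
rewrite (pr_sum HX x) (addSP iD) (addSP rA) (addSP g_add) (addSP fD) (addSP aA).
by apply: eq_bigr => i _; apply: key; apply: pr_hom.
Qed.

Lemma g_rlin b m : g (ract m b) = act (g m) b.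
Proof.
have D1 : forall m1 m2, g (ract (m1 + m2) b) = g (ract m1 b) + g (ract m2 b).
  by move=> ? ?; rewrite rDm g_add.
have D2 : forall m1 m2, act (g (m1 + m2)) b = act (g m1) b + act (g m2) b.
  by move=> ? ?; rewrite g_add aDn.
apply: (hom_red D1 D2) => j; elim/ltn_ind: j => j IH y c Hy.
have FmC : forall v, Fm j v -> g (ract v b) = act (g v) b.
  apply: (@FmH (fun v => g (ract v b)) (fun v => act (g v) b) j D1 D2).
  by move=> i x c' lt Hx; exact: (IH i lt x c' Hx).
have Ec : lact c (iota y) = ract (iota y) (tw j c) - D j y (tw j c).
  by rewrite /D tw_tw opprB addrC subrK.
have B1 : forall u v, g (ract (u - v) b) = g (ract u b) - g (ract v b).
  exact: (@addBP _ _ (fun m => g (ract m b)) D1).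
have B2 : forall u v, g (u - v) = g u - g v by exact: addBP g_add.
have B3 : forall u v, act (u - v) b = act u b - act v b.
  exact: (@addBP _ _ (fun n => act n b) (fun n n' => aDn b n n')).
rewrite Ec B1 B2 B3.
by rewrite -rM !keyG aM FmC //; apply: HD.
Qed.

Lemma g_iota x : g (iota x) = f x.
Proof. by rewrite -[iota x]r1 keyG a1. Qed.

Lemma g_uniq (g1 g2 : M -> N) :
  (forall m m', g1 (m + m') = g1 m + g1 m') ->
  (forall a m, g1 (ract m a) = act (g1 m) a) ->
  (forall x, g1 (iota x) = f x) ->
  (forall m m', g2 (m + m') = g2 m + g2 m') ->
  (forall a m, g2 (ract m a) = act (g2 m) a) ->
  (forall x, g2 (iota x) = f x) ->
  forall m, g1 m = g2 m.
Proof.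
move=> D1 R1 I1 D2 R2 I2; apply: (hom_red D1 D2) => j.
elim/ltn_ind: j => j IH y c Hy.
have FmC : forall v, Fm j v -> g1 v = g2 v.
  apply: (@FmH g1 g2 j D1 D2).
  by move=> i x c' lt Hx; exact: (IH i lt x c' Hx).
have Ec : lact c (iota y) = ract (iota y) (tw j c) - D j y (tw j c).
  by rewrite /D tw_tw opprB addrC subrK.
rewrite Ec (addBP D1 _ (D j y (tw j c))) (addBP D2 _ (D j y (tw j c))).
by rewrite R1 R2 I1 I2 FmC //; apply: HD.
Qed.
End Build.

Lemma main_res (Hdeg : degree_preserving Xg Mg iota) :
  exists (Y : lmodType R) (Yg : nat -> Y -> Prop) (iota' : Y -> M),
    [/\ graded_module Yg, degree_preserving Yg Mg iota' & right_free_on ract iota'].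
Proof.
exists X, Xg, iota; split => //.
split; first exact: iD. split; first exact: iZ.
move=> N act Hact f fD fZ; split.
- exists (@g N act f); split.
  + exact: g_add.
  + by move=> a m; apply: g_rlin.
  + exact: g_iota.
- by move=> g1 g2; apply: g_uniq.
Qed.
End Main.

Theorem lemma7p11 (R : comPzRingType) (A : algType R) (Ag : nat -> A -> Prop)
  (M : lmodType R) (Mg : nat -> M -> Prop)
  (lact : A -> M -> M) (ract : M -> A -> M)
  (X : lmodType R) (Xg : nat -> X -> Prop) (iota : X -> M) :
  graded_algebra Ag ->
  graded_bimodule Ag Mg lact ract ->
  graded_module Xg ->
  degree_preserving Xg Mg iota ->
  left_free_on lact iota ->
  (forall (m n : nat) (a b : A) (x : X), Xg m x -> Ag n b ->
     in_AX_lt lact Xg iota m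
       (ract (lact a (iota x)) b - ((-1) ^+ (m * n) : R) *: lact (a * b) (iota x))) ->
  exists (Y : lmodType R) (Yg : nat -> Y -> Prop) (iota' : Y -> M),
    [/\ graded_module Yg, degree_preserving Yg Mg iota' & right_free_on ract iota'].
Proof.
move=> HA HM HX Hdeg HL Hyp.
exact: (main_res HA HM HX HL Hyp Hdeg).
Qed.
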